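(* Let $k,t\geq 2$ be integers and let $n$ be an integer with $2t\leq n\leq 3t$. Then $A_k(n,0^t)\leq \beta_k(t)^n$, where $\beta_k(t)=k-(k-1)k^{-t-1}$.
   Context: Words are over $\Sigma_k=\{0,1,\ldots,k-1\}$, and $0^t$ is the word consisting of $t$ zeros. $A_k(m,v)$ denotes the number of words of length $m$ over $\Sigma_k$ that do not contain $v$ as a factor. *)

(* Defs.v *)
From mathcomp Require Import all_boot all_order all_algebra.
Set Implicit Arguments. Unset Strict Implicit. Unset Printing Implicit Defensive.
Import GRing.Theory Num.Theory.

Definition A (k m : nat) (v : seq 'I_k) : nat :=
  #|[set w : m.-tuple 'I_k | ~~ infix v w]|.

(* 0^t : the word of t zeros over Sigma_k (here k > 0 is encoded as k.-1.+1,
   which equals k whenever k >= 1). *)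
Definition zeros (k t : nat) : seq 'I_k.-1.+1 := nseq t ord0.

Definition beta (k t : nat) : rat :=
  (k%:R - (k%:R - 1) / (k%:R ^+ t.+1))%R.

(* Main.v *)
Require Import Defs.
From mathcomp Require Import all_boot all_order all_algebra.
From mathcomp Require Import zify ring lra.
Set Implicit Arguments. Unset Strict Implicit.

Lemma cyl (T : finType) (n : nat) (Q : 'I_n -> pred T) :
  #|[set w : n.-tuple T | [forall j, Q j (tnth w j)]]| = \prod_(j < n) #|Q j|.
Proof.
rewrite -(card_imset _ (can_inj (@finfun_of_tupleK T n))).
have -> : [set finfun_of_tuple x | x in [set w : n.-tuple T | [forall j, Q j (tnth w j)]]]
   = [set f : T ^ n | f \in family Q].
  apply/setP=> f; rewrite !inE; apply/imsetP/familyP.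
    move=> [w]; rewrite inE => /forallP H -> j. rewrite ffunE. exact: H.
  move=> H; exists (tuple_of_finfun f); last by rewrite tuple_of_finfunK.
  by rewrite inE; apply/forallP=> j; rewrite /tuple_of_finfun tnth_mktuple; apply: H.
rewrite cardsE card_family foldrE big_map big_enum /=.
by [].
Qed.
Definition g (K t i j : nat) : nat :=
  if (i <= j < i + t) then 1 else if (j == i.-1) || (j == t.-1) then K else K.+1.

Lemma prc (f : nat -> nat) a b c : (forall j, a <= j < b -> f j = c) ->
  \prod_(a <= j < b) f j = c ^ (b - a).
Proof. by move=> H; rewrite -prod_nat_const_nat; apply: eq_big_nat. Qed.

Ltac solve_g := let j := fresh "j" in let Hj := fresh "Hj" in
  move=> j Hj; rewrite /g;
  repeat match goal with |- context[if ?b then _ else _] =>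
    first [have -> : b = true by lia | have -> : b = false by lia] end.

Lemma prod1 K t n i : 1 <= i <= t -> i + t <= n ->
  \prod_(j < n) g K t i j = K * K.+1 ^ (n - t - 1).
Proof.
move=> /andP[i1 it] itn; rewrite -(big_mkord xpredT).
rewrite (big_cat_nat _ (n := i.-1)); [ | lia | lia].
rewrite (big_cat_nat _ (m := i.-1) (n := i)); [ | lia | lia].
rewrite (big_cat_nat _ (m := i) (n := i + t)); [ | lia | lia].
rewrite (@prc _ 0 i.-1 K.+1); last by solve_g.
rewrite (@prc _ i.-1 i K); last by solve_g.
rewrite (@prc _ i (i + t) 1); last by solve_g.
rewrite (@prc _ (i + t) n K.+1); last by solve_g.
rewrite exp1n subn0 (_ : i - i.-1 = 1); last by lia.
have -> : n - t - 1 = i.-1 + (n - (i+t)) by lia.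
rewrite expnD /=; rewrite mul1n expn1 mulnCA mulnA //.
Qed.

Lemma prod2 K t n i : 1 <= t < i -> i + t <= n ->
  \prod_(j < n) g K t i j = K ^ 2 * K.+1 ^ (n - t - 2).
Proof.
move=> /andP[t1 it] itn; rewrite -(big_mkord xpredT).
rewrite (big_cat_nat _ (n := t.-1)); [ | lia | lia].
rewrite (big_cat_nat _ (m := t.-1) (n := t)); [ | lia | lia].
rewrite (big_cat_nat _ (m := t) (n := i.-1)); [ | lia | lia].
rewrite (big_cat_nat _ (m := i.-1) (n := i)); [ | lia | lia].
rewrite (big_cat_nat _ (m := i) (n := i + t)); [ | lia | lia].
rewrite (@prc _ 0 t.-1 K.+1); last by solve_g.
rewrite (@prc _ t.-1 t K); last by solve_g.
rewrite (@prc _ t i.-1 K.+1); last by solve_g.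
rewrite (@prc _ i.-1 i K); last by solve_g.
rewrite (@prc _ i (i + t) 1); last by solve_g.
rewrite (@prc _ (i + t) n K.+1); last by solve_g.
rewrite exp1n subn0 (_ : i - i.-1 = 1); last by lia.
rewrite (_ : t - t.-1 = 1); last by lia.
have -> : n - t - 2 = t.-1 + (i.-1 - t) + (n - (i + t)) by lia.
rewrite !expnD /= mul1n !expn1.
move: (K.+1 ^ t.-1) (K.+1 ^ (i.-1 - t)) (K.+1 ^ (n-(i+t))) => a b c; nia.
Qed.
Section S.
Variables (K t n : nat).
Definition Fp (i j : nat) : pred 'I_K.+1 := fun x =>
  if (i <= j < i + t) then x == ord0 else if (j == i.-1) || (j == t.-1) then x != ord0 else true.
Definition Fset (i : nat) := [set w : n.-tuple 'I_K.+1 | [forall j : 'I_n, Fp i j (tnth w j)]].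

Lemma Fat i (w : n.-tuple 'I_K.+1) p : p < n -> w \in Fset i -> Fp i p (nth ord0 w p).
Proof.
move=> pn; rewrite inE => /forallP /(_ (Ordinal pn)).
by rewrite (tnth_nth ord0).
Qed.

Lemma Fcontains i w : i + t <= n -> w \in Fset i -> infix (nseq t (@ord0 K)) w.
Proof.
move=> itn Hw; apply/infixP; exists (take i w), (drop (i + t) w).
have E : take t (drop i w) = nseq t ord0.
  apply: (@eq_from_nth _ ord0).
    by rewrite size_take size_drop size_tuple size_nseq; case: (ltnP t (n - i)); lia.
  move=> j; rewrite size_take size_drop size_tuple => Hj.
  have jt : j < t by move: Hj; case: (ltnP t (n - i)); lia.
  rewrite nth_take // nth_drop nth_nseq jt.
  have := Fat (p := i + j) _ Hw; rewrite /Fp.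
  have -> : (i <= i + j < i + t) = true by lia.
  by move=> H; apply/eqP; apply: H; lia.
by rewrite -E (addnC i t) -drop_drop !cat_take_drop.
Qed.

Lemma Fdisj i i' w : 1 <= i < i' -> i' + t <= n -> n <= 3 * t ->
  w \in Fset i -> w \in Fset i' -> False.
Proof.
move=> /andP[i1 ii] itn n3 H H'.
case: (leqP i' (i + t)) => Hc.
  have := Fat (p := i'.-1) _ H; have := Fat (p := i'.-1) _ H'; rewrite /Fp.
  have -> : (i' <= i'.-1 < i' + t) = false by lia.
  have -> : (i <= i'.-1 < i + t) = true by lia.
  rewrite eqxx /= => h1 h2; have := h1 ltac:(lia); have := h2 ltac:(lia).
  by move=> /eqP ->.
have := Fat (p := t.-1) _ H; have := Fat (p := t.-1) _ H'; rewrite /Fp.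
have -> : (i' <= t.-1 < i' + t) = false by lia.
have -> : (i <= t.-1 < i + t) = true by lia.
rewrite eqxx orbT /= => h1 h2; have := h1 ltac:(lia); have := h2 ltac:(lia).
by move=> /eqP ->.
Qed.

Lemma pointwise w : n <= 3 * t ->
  \sum_(i < n - t) (w \in Fset i.+1) <= infix (nseq t (@ord0 K)) w.
Proof.
move=> n3.
case: (pickP (fun i : 'I_(n - t) => w \in Fset i.+1)) => [i0 Hi0|none]; last first.
  by rewrite big1 // => i _; rewrite none.
rewrite (bigD1 i0) //= Hi0 big1 ?addn0.
  by rewrite (Fcontains (i := i0.+1)) //; have := ltn_ord i0; lia.
move=> i ne; case Hw: (w \in Fset i.+1) => //; exfalso.
case: (ltngtP i i0) => Hc.
- by apply: (@Fdisj i.+1 i0.+1 w) => //; have := ltn_ord i0; lia.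
- by apply: (@Fdisj i0.+1 i.+1 w) => //; have := ltn_ord i; lia.
by move: ne; rewrite -val_eqE /= Hc eqxx.
Qed.


Lemma cardF i : #|Fset i| = \prod_(j < n) g K t i j.
Proof.
rewrite /Fset (cyl (fun j : 'I_n => Fp i j)); apply: eq_bigr => j _; rewrite /g.
case E1: (i <= j < i + t).
  rewrite -(card1 (@ord0 K)); apply: eq_card => x; by rewrite /Fp E1 inE.
case E2: ((j == i.-1 :> nat) || (j == t.-1 :> nat)).
  transitivity #|predC1 (@ord0 K)|; last by rewrite cardC1 card_ord.
  by apply: eq_card => x; rewrite /Fp E1 E2 !inE.
rewrite -[K.+1 in RHS](card_ord K.+1); apply: eq_card => x; by rewrite /Fp E1 E2.
Qed.

Lemma cardS (T : finType) (B : {set T}) : #|B| = \sum_w (w \in B : nat).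
Proof. by rewrite -sum1_card big_mkcond; apply: eq_bigr => w _; case: (w \in B). Qed.

Lemma sumF : n <= 3 * t ->
  \sum_(i < n - t) #|Fset i.+1| <= #|[set w : n.-tuple 'I_K.+1 | infix (nseq t (@ord0 K)) w]|.
Proof.
move=> n3.
rewrite (eq_bigr (fun i : 'I_(n - t) => \sum_w (w \in Fset i.+1 : nat))); last by move=> i _; rewrite cardS.
rewrite exchange_big /= cardS; apply: leq_sum => w _; rewrite inE.
exact: pointwise.
Qed.

Lemma sumG : 1 <= t -> 2 * t <= n ->
  \sum_(i < n - t) #|Fset i.+1| = t * (K * K.+1 ^ (n - t - 1)) + (n - 2 * t) * (K ^ 2 * K.+1 ^ (n - t - 2)).
Proof.
move=> t1 n2.
rewrite (eq_bigr (fun i : 'I_(n - t) => \prod_(j < n) g K t i.+1 j)); last by move=> i _; rewrite cardF.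
rewrite -(big_mkord xpredT (fun i => \prod_(j < n) g K t i.+1 j)).
rewrite (big_cat_nat _ (n := t)) /=; [|lia|lia].
rewrite (eq_big_nat _ _ (F2 := fun _ => K * K.+1 ^ (n - t - 1))); last first.
  move=> i Hi; apply: prod1; lia.
rewrite [X in _ + X](eq_big_nat _ _ (F2 := fun _ => K ^ 2 * K.+1 ^ (n - t - 2))); last first.
  move=> i Hi; apply: prod2; lia.
rewrite !sum_nat_const_nat; congr (_ * _ + _ * _); lia.
Qed.

End S.

Local Open Scope ring_scope.
Import Order.TTheory GRing.Theory Num.Theory.
Lemma bern (a c : rat) (m : nat) : 0 <= c -> c <= a ->
  a ^+ m.+1 - m.+1%:R * a ^+ m * c <= (a - c) ^+ m.+1.
Proof.
move=> c0 ca; elim: m => [|m IH]; first by rewrite !expr1 expr0 mulr1 mul1r.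
rewrite (exprS a m.+1) (exprS (a - c) m.+1) (exprS a m).
have P0 : 0 <= a ^+ m by apply: exprn_ge0; lra.
move: IH; rewrite (exprS a m).
set P := a ^+ m; set Q := (a - c) ^+ m.+1 => IH.
have h1 : 0 <= (a - c) * (Q - (a * P - m.+1%:R * P * c)) by apply: mulr_ge0; lra.
have h2 : 0 <= m.+1%:R * P * (c * c) by apply: mulr_ge0; [apply: mulr_ge0 => //; apply: ler0n| apply: mulr_ge0].
rewrite -!natr1 in h2 h1 *.
nra.
Qed.

Theorem lemma13 (k t n : nat) :
  (2 <= k)%N -> (2 <= t)%N -> (2 * t <= n)%N -> (n <= 3 * t)%N ->
  (((A n (zeros k t))%:R : rat) <= beta k t ^+ n)%R.
Proof.
case: k => [|K] // k2 t2 n2 n3.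
set C := #|[set w : n.-tuple 'I_K.+1 | infix (nseq t (@ord0 K)) w]|.
have HA : (A n (zeros K.+1 t) + C = K.+1 ^ n)%N.
  rewrite /A /zeros /=.
  have -> : [set w : n.-tuple 'I_K.+1 | ~~ infix (nseq t ord0) w]
          = ~: [set w : n.-tuple 'I_K.+1 | infix (nseq t ord0) w].
    by apply/setP => w; rewrite !inE.
  by rewrite addnC cardsC card_tuple card_ord.
set X := (K.+1 ^ (n - t - 2))%N.
have HC : (n * K * X <= C)%N.
  apply: leq_trans (sumF K n3); rewrite sumG; [|lia|lia].
  have -> : (n - t - 1 = (n - t - 2).+1)%N by lia.
  rewrite expnS -/X.
  have -> : n = ((n - 2 * t) + 2 * t)%N by lia.
  set m := (n - 2 * t)%N. have Km : (1 <= K)%N by lia.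
  rewrite addnK -mulnn addnC mulnDl mulnDl; apply: leq_add.
  - rewrite -!mulnA [X in (X <= _)%N]mulnCA leq_mul2l [X in (_ <= X)%N]mulnCA leq_mul2r ltnS Km !orbT //.
  - by rewrite -!mulnA leq_mul2l mulnA leq_mul2r leq_pmulr // !orbT.
have HAle : (A n (zeros K.+1 t) + n * K * X <= K.+1 ^ n)%N by lia.
have Eb : beta K.+1 t = K.+1%:R - K%:R / K.+1%:R ^+ t.+1.
  by rewrite /beta -natr1 addrK.
rewrite Eb.
have [n' En] : exists n', n = n'.+1 by exists n.-1; lia.
subst n.
set a : rat := K.+1%:R.
have Hlt : (A n'.+1 (zeros K.+1 t))%:R <= a ^+ n'.+1 - (n'.+1 * K * X)%:R.
  by rewrite lerBrDr -natrD /a -natrX ler_nat.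
apply: le_trans Hlt _.
have a0 : a ^+ t.+1 != 0 by rewrite expf_neq0 // /a pnatr_eq0.
have ap : 0 < a ^+ t.+1 by rewrite exprn_gt0 // /a ltr0n.
have Ea : a ^+ n' = a ^+ (n' - t - 1) * a ^+ t.+1 by rewrite -exprD; congr (_ ^+ _); lia.
have -> : (n'.+1 * K * X)%:R = n'.+1%:R * a ^+ n' * (K%:R / a ^+ t.+1) :> rat.
  rewrite Ea /X !natrM natrX -/a (_ : (n'.+1 - t - 2 = n' - t - 1)%N); last by lia.
  field; exact: a0.
apply: bern.
  by apply: divr_ge0; [apply: ler0n | apply: ltW].
rewrite ler_pdivrMr // /a -exprS -natrX ler_nat.
have : (0 < K.+1 ^ t.+1)%N by rewrite expn_gt0.
move=> h; rewrite (expnS _ t.+1); nia.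
Qed.
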